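(* Let $\mathcal{H}_X,\mathcal{H}_Z,\mathcal{H}_A$ be finite-dimensional Hilbert spaces and let $\mathcal{S}_4:\mathrm{CPTP}(\mathcal{H}_X,\mathcal{H}_Z\otimes\mathcal{H}_A)\to\mathrm{CPTP}(\mathcal{H}_X,\mathcal{H}_Z)$ be the supermap $\mathcal{S}_4(\mathcal{N})=\mathrm{Tr}_A\circ\mathcal{N}$. Let $\{\Pi_k\}$ be a projective measurement on $\mathcal{H}_X$ (orthogonal projectors with $\Pi_k\Pi_l=\delta_{kl}\Pi_k$ and $\sum_k\Pi_k=\mathbb{1}_X$), let $\gamma_k$ be full-rank density operators on $\mathcal{H}_Z\otimes\mathcal{H}_A$, and let $\Gamma(\rho)=\sum_k\mathrm{Tr}[\Pi_k\rho]\,\gamma_k$. For each $k$ let $\mathcal{P}_k$ be the Petz map of $\mathrm{Tr}_A$ with reference state $\gamma_k$: $$\mathcal{P}_k(\sigma)=\gamma_k^{1/2}\Big((\mathrm{Tr}_A\gamma_k)^{-1/2}\,\sigma\,(\mathrm{Tr}_A\gamma_k)^{-1/2}\otimes\mathbb{1}_A\Big)\gamma_k^{1/2}.$$ Define, for $\mathcal{M}\in\mathrm{CPTP}(\mathcal{H}_X,\mathcal{H}_Z)$, the map $\mathcal{R}(\mathcal{M})(\rho):=\sum_k\mathcal{P}_k\big(\mathcal{M}(\Pi_k\rho\Pi_k)\big)$. Then $\mathcal{R}$ is a superchannel from $\mathrm{CPTP}(\mathcal{H}_X,\mathcal{H}_Z)$ to $\mathrm{CPTP}(\mathcal{H}_X,\mathcal{H}_Z\otimes\mathcal{H}_A)$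 and $\mathcal{R}(\mathcal{S}_4(\Gamma))=\Gamma$.
   Context: $\mathrm{CPTP}(\mathcal{H},\mathcal{K})$ denotes the set of quantum channels from operators on $\mathcal{H}$ to operators on $\mathcal{K}$. A superchannel is a linear map on linear maps sending channels to channels that can be realized as $\mathcal{N}\mapsto\mathcal{E}_{\rm post}\circ(\mathcal{N}\otimes\mathcal{I}_M)\circ\mathcal{E}_{\rm pre}$ for some ancilla system $M$ and quantum channels $\mathcal{E}_{\rm pre},\mathcal{E}_{\rm post}$ (i.e. it is deterministically implementable given one black-box use of the input channel). *)

(* Defs.v *)
From HB Require Import structures.
From mathcomp Require Import all_boot all_order all_algebra.
From mathcomp Require Import complex mxtens.
From mathcomp Require Import Rstruct.
From Stdlib Require Import ClassicalEpsilon.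

Set Implicit Arguments.
Unset Strict Implicit.
Unset Printing Implicit Defensive.

Import Order.TTheory GRing.Theory Num.Theory.
Local Open Scope ring_scope.

Notation C := (Rdefinitions.R)[i].

Definition adjmx {m n : nat} (A : 'M[C]_(m, n)) : 'M[C]_(n, m) :=
  (map_mx Num.conj A)^T.

Definition herm_op {n : nat} (A : 'M[C]_n) : Prop := adjmx A = A.

Definition psd {n : nat} (A : 'M[C]_n) : Prop :=
  herm_op A /\ forall v : 'cV[C]_n, 0 <= (adjmx v *m A *m v) 0 0.

Definition density {n : nat} (A : 'M[C]_n) : Prop := psd A /\ \tr A = 1.

Definition linmap {m n : nat} (f : 'M[C]_m -> 'M[C]_n) : Prop :=
  forall (a : C) (X Y : 'M[C]_m), f (a *: X + Y) = a *: f X + f Y.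

(* Tensor convention: H_1 (x) H_2 is indexed by 'I_(n1 * n2) through
   mxtens_index (i1, i2) (first factor major), matching mxtens' tensmx. *)

Definition blk {m k : nat} (X : 'M[C]_(m * k)) (a b : 'I_k) : 'M[C]_m :=
  \matrix_(i, j) X (mxtens_index (i, a)) (mxtens_index (j, b)).

Definition tens_id {m n : nat} (f : 'M[C]_m -> 'M[C]_n) (k : nat)
  (X : 'M[C]_(m * k)) : 'M[C]_(n * k) :=
  \sum_(a < k) \sum_(b < k) (f (blk X a b) *t (delta_mx a b : 'M[C]_k)).
Arguments tens_id {m n} f k X.

Definition completely_positive {m n : nat} (f : 'M[C]_m -> 'M[C]_n) : Prop :=
  forall (k : nat) (X : 'M[C]_(m * k)), psd X -> psd (tens_id f k X).

Definition trace_preserving {m n : nat} (f : 'M[C]_m -> 'M[C]_n) : Prop :=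
  forall X : 'M[C]_m, \tr (f X) = \tr X.

Definition CPTP {m n : nat} (f : 'M[C]_m -> 'M[C]_n) : Prop :=
  [/\ linmap f, completely_positive f & trace_preserving f].

Definition ptrace2 {m n : nat} (X : 'M[C]_(m * n)) : 'M[C]_m :=
  \matrix_(i, j) \sum_(a < n) X (mxtens_index (i, a)) (mxtens_index (j, a)).

Definition superchannel {a b c d : nat}
  (S : ('M[C]_a -> 'M[C]_b) -> ('M[C]_c -> 'M[C]_d)) : Prop :=
  [/\ (forall (al : C) (N1 N2 : 'M[C]_a -> 'M[C]_b), linmap N1 -> linmap N2 ->
         forall X, S (fun Y => al *: N1 Y + N2 Y) X = al *: S N1 X + S N2 X),
      (forall N, CPTP N -> CPTP (S N)) &
      exists (m : nat) (Epre : 'M[C]_c -> 'M[C]_(a * m))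
             (Epost : 'M[C]_(b * m) -> 'M[C]_d),
        [/\ CPTP Epre, CPTP Epost &
            forall N, linmap N -> forall X, S N X = Epost (tens_id N m (Epre X))]].

(* the positive semidefinite square root (the unique psd S with S S = A when
   A is psd; 0 otherwise) *)
Definition sqrtm {n : nat} (A : 'M[C]_n) : 'M[C]_n :=
  match excluded_middle_informative (exists S : 'M[C]_n, psd S /\ S *m S = A) with
  | left H => proj1_sig (constructive_indefinite_description _ H)
  | right _ => 0
  end.

Definition petz {z a : nat} (g : 'M[C]_(z * a)) (s : 'M[C]_z) : 'M[C]_(z * a) :=
  let h := invmx (sqrtm (ptrace2 g)) in
  sqrtm g *m ((h *m s *m h) *t (1%:M : 'M[C]_a)) *m sqrtm g.

Definition S4 {x z a : nat} (N : 'M[C]_x -> 'M[C]_(z * a)) : 'M[C]_x -> 'M[C]_z :=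
  fun rho => ptrace2 (N rho).

Definition Gam {x za K : nat} (Pi : 'I_K -> 'M[C]_x) (gam : 'I_K -> 'M[C]_za)
  (rho : 'M[C]_x) : 'M[C]_za :=
  \sum_(k < K) \tr (Pi k *m rho) *: gam k.

Definition Rmap {x z a K : nat} (Pi : 'I_K -> 'M[C]_x) (gam : 'I_K -> 'M[C]_(z * a))
  (M : 'M[C]_x -> 'M[C]_z) (rho : 'M[C]_x) : 'M[C]_(z * a) :=
  \sum_(k < K) petz (gam k) (M (Pi k *m rho *m Pi k)).

(* Main.v *)
Require Import Defs.
From HB Require Import structures.
From mathcomp Require Import all_boot all_order all_algebra.
From mathcomp Require Import complex mxtens.
From mathcomp Require Import Rstruct.
From mathcomp Require Import sesquilinear spectral.
From Stdlib Require Import ClassicalEpsilon.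
Set Implicit Arguments.
Unset Strict Implicit.
Unset Printing Implicit Defensive.
Import Order.TTheory GRing.Theory Num.Theory.
Local Open Scope ring_scope.
Lemma adjmxE m n (A : 'M[C]_(m, n)) i j : adjmx A i j = (A j i)^*.
Proof. by rewrite /adjmx !mxE. Qed.

Lemma adjmxK m n (A : 'M[C]_(m, n)) : adjmx (adjmx A) = A.
Proof. by apply/matrixP=> i j; rewrite !adjmxE conjCK. Qed.

Lemma adjmxM m n p (A : 'M[C]_(m, n)) (B : 'M[C]_(n, p)) :
  adjmx (A *m B) = adjmx B *m adjmx A.
Proof.
apply/matrixP=> i j; rewrite adjmxE !mxE rmorph_sum; apply: eq_bigr => k _.
by rewrite !adjmxE rmorphM mulrC.
Qed.

Lemma adjmxD m n (A B : 'M[C]_(m, n)) : adjmx (A + B) = adjmx A + adjmx B.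
Proof. by apply/matrixP=> i j; rewrite !mxE rmorphD. Qed.

Lemma adjmxZ m n a (A : 'M[C]_(m, n)) : adjmx (a *: A) = a^* *: adjmx A.
Proof. by apply/matrixP=> i j; rewrite !mxE rmorphM. Qed.

Lemma adjmx0 m n : adjmx (0 : 'M[C]_(m, n)) = 0.
Proof. by apply/matrixP=> i j; rewrite !mxE rmorph0. Qed.

Lemma adjmx_sum m n I (r : seq I) (P : pred I) (F : I -> 'M[C]_(m, n)) :
  adjmx (\sum_(i <- r | P i) F i) = \sum_(i <- r | P i) adjmx (F i).
Proof.
elim/big_rec2: _ => [|i y1 y2 _ <-]; first exact: adjmx0.
by rewrite adjmxD.
Qed.

Lemma adjmx1 n : adjmx (1%:M : 'M[C]_n) = 1%:M.
Proof. by apply/matrixP=> i j; rewrite !mxE rmorph_nat eq_sym. Qed.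

Lemma adjmx_delta m n (i : 'I_m) (j : 'I_n) :
  adjmx (delta_mx i j : 'M[C]_(m, n)) = delta_mx j i.
Proof.
apply/matrixP=> p q; rewrite !mxE andbC.
by case: (_ && _); rewrite ?rmorph1 ?rmorph0.
Qed.

Lemma adjmxT m n p q (A : 'M[C]_(m, n)) (B : 'M[C]_(p, q)) :
  adjmx (A *t B) = adjmx A *t adjmx B.
Proof. by apply/matrixP=> i j; rewrite !mxE rmorphM. Qed.

Lemma adjmx_inv n (A : 'M[C]_n) : adjmx (invmx A) = invmx (adjmx A).
Proof.
rewrite /adjmx -trmx_inv; congr (_^T).
exact: (map_invmx (@Num.conj C)).
Qed.

Lemma tensmxDl m n p q (A B : 'M[C]_(m, n)) (D : 'M[C]_(p, q)) :
  (A + B) *t D = A *t D + B *t D.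
Proof. by apply/matrixP=> i j; rewrite !mxE mulrDl. Qed.
Lemma tensmxDr m n p q (A : 'M[C]_(m, n)) (B D : 'M[C]_(p, q)) :
  A *t (B + D) = A *t B + A *t D.
Proof. by apply/matrixP=> i j; rewrite !mxE mulrDr. Qed.
Lemma tensmxZl m n p q a (A : 'M[C]_(m, n)) (D : 'M[C]_(p, q)) :
  (a *: A) *t D = a *: (A *t D).
Proof. by apply/matrixP=> i j; rewrite !mxE mulrA. Qed.
Lemma tensmx_suml m n p q I (r : seq I) (P : pred I) (F : I -> 'M[C]_(m, n)) (D : 'M[C]_(p, q)) :
  (\sum_(i <- r | P i) F i) *t D = \sum_(i <- r | P i) (F i *t D).
Proof.
elim/big_rec2: _ => [|i y1 y2 _ <-]; first exact: tens0mx.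
by rewrite tensmxDl.
Qed.
Lemma tensmx_sumr m n p q I (r : seq I) (P : pred I) (A : 'M[C]_(m, n)) (F : I -> 'M[C]_(p, q)) :
  A *t (\sum_(i <- r | P i) F i) = \sum_(i <- r | P i) (A *t F i).
Proof.
elim/big_rec2: _ => [|i y1 y2 _ <-]; first exact: tensmx0.
by rewrite tensmxDr.
Qed.

Lemma tens11 m n : (1%:M : 'M[C]_m) *t (1%:M : 'M[C]_n) = 1%:M.
Proof.
apply/matrixP=> i j.
case: (mxtens_indexP i)=> i1 i2; case: (mxtens_indexP j)=> j1 j2.
rewrite tensmxE !mxE (inj_eq (can_inj (@mxtens_indexK _ _))) xpair_eqE.
by case: (i1 == j1); case: (i2 == j2); rewrite ?mulr1 ?mulr0.
Qed.

Lemma sum_tens m n (F : 'I_(m * n) -> C) :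
  \sum_(i < m * n) F i = \sum_(i < m) \sum_(j < n) F (mxtens_index (i, j)).
Proof.
rewrite pair_big /= (reindex (fun ij : 'I_m * 'I_n => mxtens_index ij)) /=.
  by apply: eq_bigr => -[i j] _.
by exists (@mxtens_unindex m n) => k _; rewrite (mxtens_indexK, mxtens_unindexK).
Qed.

Lemma mxtrace_tens m n (A : 'M[C]_m) (B : 'M[C]_n) : \tr (A *t B) = \tr A * \tr B.
Proof.
rewrite /mxtrace sum_tens mulr_suml; apply: eq_bigr => i _.
by rewrite mulr_sumr; apply: eq_bigr => j _; rewrite tensmxE.
Qed.

Lemma blkD m k (X Y : 'M[C]_(m * k)) a b : blk (X + Y) a b = blk X a b + blk Y a b.
Proof. by apply/matrixP=> i j; rewrite !mxE. Qed.
Lemma blkZ m k c (X : 'M[C]_(m * k)) a b : blk (c *: X) a b = c *: blk X a b.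
Proof. by apply/matrixP=> i j; rewrite !mxE. Qed.
Lemma blk0 m k a b : blk (0 : 'M[C]_(m * k)) a b = 0.
Proof. by apply/matrixP=> i j; rewrite !mxE. Qed.
Lemma blk_sum m k I (r : seq I) (P : pred I) (F : I -> 'M[C]_(m * k)) a b :
  blk (\sum_(i <- r | P i) F i) a b = \sum_(i <- r | P i) blk (F i) a b.
Proof.
elim/big_rec2: _ => [|i y1 y2 _ <-]; first exact: blk0.
by rewrite blkD.
Qed.
Lemma blk_tens m k (A : 'M[C]_m) (B : 'M[C]_k) a b : blk (A *t B) a b = B a b *: A.
Proof. by apply/matrixP=> i j; rewrite [LHS]mxE tensmxE mxE mulrC. Qed.

Lemma blk_tens_id m n (f : 'M[C]_m -> 'M[C]_n) k (X : 'M[C]_(m * k)) c d :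
  blk (tens_id f k X) c d = f (blk X c d).
Proof.
rewrite /tens_id blk_sum (bigD1 c) //= [X in _ + X]big1 ?addr0; last first.
  by move=> a /negbTE ac; rewrite blk_sum big1 // => b _; rewrite blk_tens mxE eq_sym ac scale0r.
rewrite blk_sum (bigD1 d) //= [X in _ + X]big1 ?addr0; last first.
  by move=> b /negbTE bd; rewrite blk_tens mxE [d == b]eq_sym bd andbF scale0r.
by rewrite blk_tens mxE !eqxx scale1r.
Qed.

Lemma tens_id_idE m k (X : 'M[C]_(m * k)) :
  X = \sum_(a < k) \sum_(b < k) (blk X a b *t (delta_mx a b : 'M[C]_k)).
Proof.
apply/matrixP=> i j.
case: (mxtens_indexP i)=> i1 i2; case: (mxtens_indexP j)=> j1 j2.
rewrite summxE (bigD1 i2) //= [X in _ + X]big1 ?addr0; last first.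
  by move=> a /negbTE ai; rewrite summxE big1 // => b _; rewrite tensmxE !mxE eq_sym ai mulr0.
rewrite summxE (bigD1 j2) //= [X in _ + X]big1 ?addr0; last first.
  by move=> b /negbTE bj; rewrite tensmxE !mxE eq_sym bj andbF mulr0.
by rewrite tensmxE !mxE !eqxx mulr1.
Qed.

Lemma tens_id_ext m n (f g : 'M[C]_m -> 'M[C]_n) k X :
  f =1 g -> tens_id f k X = tens_id g k X.
Proof. by move=> fg; rewrite /tens_id; apply: eq_bigr => a _; apply: eq_bigr => b _; rewrite fg. Qed.

Lemma tens_id_comp m n p (f : 'M[C]_n -> 'M[C]_p) (g : 'M[C]_m -> 'M[C]_n) k X :
  tens_id (fun Y => f (g Y)) k X = tens_id f k (tens_id g k X).
Proof.
by rewrite /tens_id; apply: eq_bigr => a _; apply: eq_bigr => b _; rewrite blk_tens_id.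
Qed.

Lemma tens_id_sum m n I (r : seq I) (P : pred I) (F : I -> 'M[C]_m -> 'M[C]_n) k X :
  tens_id (fun Y => \sum_(i <- r | P i) F i Y) k X = \sum_(i <- r | P i) tens_id (F i) k X.
Proof.
rewrite /tens_id; under eq_bigr => a _ do under eq_bigr => b _ do rewrite tensmx_suml.
rewrite [RHS]exchange_big; apply: eq_bigr => a _.
by rewrite exchange_big.
Qed.

Lemma tens_id_kraus m n (B : 'M[C]_(n, m)) k X :
  tens_id (fun Y => B *m Y *m adjmx B) k X =
  (B *t (1%:M : 'M[C]_k)) *m X *m adjmx (B *t (1%:M : 'M[C]_k)).
Proof.
rewrite {2}(tens_id_idE X) adjmxT adjmx1 mulmx_sumr mulmx_suml.
apply: eq_bigr => a _; rewrite mulmx_sumr mulmx_suml; apply: eq_bigr => b _.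
by rewrite !tensmx_mul mul1mx mulmx1.
Qed.

Lemma sum_delta (I : finType) (x : I) (F : I -> C) :
  \sum_(i : I) (i == x)%:R * F i = F x.
Proof.
rewrite (bigD1 x) //= eqxx mul1r big1 ?addr0 // => i /negbTE ->; exact: mul0r.
Qed.
Lemma sum_delta_r (I : finType) (x : I) (F : I -> C) :
  \sum_(i : I) F i * (i == x)%:R = F x.
Proof. by rewrite -[RHS](sum_delta x); apply: eq_bigr => i _; rewrite mulrC. Qed.

Lemma herm_conj n m (B : 'M[C]_(n, m)) (Y : 'M[C]_m) :
  herm_op Y -> herm_op (B *m Y *m adjmx B).
Proof. by rewrite /herm_op => hY; rewrite !adjmxM adjmxK hY mulmxA. Qed.

Lemma psd_conj n m (B : 'M[C]_(n, m)) (Y : 'M[C]_m) :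
  psd Y -> psd (B *m Y *m adjmx B).
Proof.
case=> hY pY; split; first exact: herm_conj.
move=> v; have := pY (adjmx B *m v).
by rewrite adjmxM adjmxK !mulmxA.
Qed.

Lemma psd0 n : psd (0 : 'M[C]_n).
Proof.
split; first by rewrite /herm_op adjmx0.
by move=> v; rewrite mulmx0 mul0mx mxE.
Qed.

Lemma psdD n (X Y : 'M[C]_n) : psd X -> psd Y -> psd (X + Y).
Proof.
case=> hX pX [hY pY]; split; first by rewrite /herm_op adjmxD hX hY.
by move=> v; rewrite mulmxDr mulmxDl mxE addr_ge0.
Qed.

Lemma psd_sum n I (r : seq I) (P : pred I) (F : I -> 'M[C]_n) :
  (forall i, P i -> psd (F i)) -> psd (\sum_(i <- r | P i) F i).
Proof.
move=> H; elim/big_rec: _ => [|i y Pi py]; first exact: psd0.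
exact: psdD (H i Pi) py.
Qed.

Lemma cp_kraus n m (B : 'M[C]_(n, m)) :
  completely_positive (fun X => B *m X *m adjmx B).
Proof. by move=> k X pX; rewrite tens_id_kraus; exact: psd_conj. Qed.

Lemma cp_sum m n I (r : seq I) (P : pred I) (F : I -> 'M[C]_m -> 'M[C]_n) :
  (forall i, completely_positive (F i)) ->
  completely_positive (fun X => \sum_(i <- r | P i) F i X).
Proof.
move=> H k X pX; rewrite tens_id_sum; apply: psd_sum => i _; exact: H.
Qed.

Lemma cp_comp m n p (f : 'M[C]_n -> 'M[C]_p) (g : 'M[C]_m -> 'M[C]_n) :
  completely_positive f -> completely_positive g ->
  completely_positive (fun X => f (g X)).
Proof. by move=> cf cg k X pX; rewrite tens_id_comp; apply: cf; apply: cg. Qed.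

Lemma cp_ext m n (f g : 'M[C]_m -> 'M[C]_n) :
  f =1 g -> completely_positive f -> completely_positive g.
Proof. by move=> fg cf k X pX; have := cf k X pX; rewrite (tens_id_ext _ fg). Qed.

Definition Jm (n k : nat) (a : 'I_k) : 'M[C]_(n * k, n) :=
  \matrix_(i, j) (i == mxtens_index (j, a))%:R.

Lemma JmE n k (a : 'I_k) (i1 : 'I_n) (i2 : 'I_k) p :
  Jm n a (mxtens_index (i1, i2)) p = (i2 == a)%:R * (p == i1)%:R.
Proof.
rewrite mxE (inj_eq (can_inj (@mxtens_indexK _ _))) xpair_eqE eq_sym.
by case: (p == i1); case: (i2 == a); rewrite ?mulr1 ?mulr0.
Qed.

Lemma Jm_adj n k (a : 'I_k) (Y : 'M[C]_(n * k)) :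
  adjmx (Jm n a) *m Y *m Jm n a = blk Y a a.
Proof.
apply/matrixP=> p q; rewrite !mxE.
under eq_bigr => j _ do (rewrite !mxE; under eq_bigr => i _ do rewrite !mxE rmorph_nat).
under eq_bigr => j _ do rewrite sum_delta.
exact: sum_delta_r.
Qed.

Lemma Jm_conj n k (a : 'I_k) (Z : 'M[C]_n) :
  Jm n a *m Z *m adjmx (Jm n a) = Z *t (delta_mx a a : 'M[C]_k).
Proof.
apply/matrixP=> i j.
case: (mxtens_indexP i)=> i1 i2; case: (mxtens_indexP j)=> j1 j2.
rewrite tensmxE [in RHS]mxE [LHS]mxE.
under eq_bigr => q _ do rewrite adjmxE JmE rmorphM !rmorph_nat [X in X * _]mxE.
under eq_bigr => q _ do (under eq_bigr => p _ do rewrite JmE -mulrA; rewrite -mulr_sumr sum_delta).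
under eq_bigr => q _ do rewrite mulrCA -mulrA.
rewrite -!mulr_sumr sum_delta_r.
by case: (j2 == a); case: (i2 == a); rewrite ?(mulr0, mul0r, mulr1, mul1r).
Qed.


Lemma adj_herm_ex n (A : 'M[C]_n) : herm_op A -> A \is hermsymmx.
Proof.
rewrite /herm_op => hA; rewrite qualifE /= expr0 scale1r.
apply/eqP; rewrite -[LHS]hA; apply/matrixP => i j; rewrite !mxE //.
Qed.

Lemma entry_delta n (M : 'M[C]_n) (i : 'I_n) :
  (adjmx (delta_mx i ord0 : 'M[C]_(n, 1)) *m M *m (delta_mx i ord0 : 'M[C]_(n, 1))) ord0 ord0 = M i i.
Proof. by rewrite adjmx_delta -rowE -colE !mxE. Qed.

Lemma psd_sqrt_ex n (A : 'M[C]_n) : psd A -> exists S, psd S /\ S *m S = A.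
Proof.
move=> pA; have [hA pAv] := pA.
have /hermitian_normalmx /orthomx_spectralP Aeq := adj_herm_ex hA.
set P := spectralmx A in Aeq; set d := spectral_diag A in Aeq.
have Pu : P \is unitarymx := spectral_unitarymx A.
have Punit : P \in unitmx := unitarymx_unit Pu.
have PtE : (P ^t* )%sesqui = adjmx P by apply/matrixP => i j; rewrite !mxE.
set Q := adjmx P.
have QP : adjmx Q = P by rewrite adjmxK.
have invP : invmx P = Q by rewrite invmx_unitary // PtE.
have AE : A = Q *m diag_mx d *m adjmx Q by rewrite QP -invP.
have QaQ : adjmx Q *m Q = 1%:M by rewrite QP -invP mulmxV.
have QQa : Q *m adjmx Q = 1%:M by rewrite QP -invP mulVmx.
have d_ge0 : forall j, 0 <= d 0 j.
  move=> j; have := pAv (Q *m delta_mx j 0).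
  rewrite adjmxM AE !mulmxA -[adjmx _ *m adjmx Q *m Q]mulmxA QaQ mulmx1.
  rewrite -[_ *m adjmx Q *m Q]mulmxA QaQ mulmx1.
  by rewrite entry_delta mxE eqxx mulr1n.
pose s := \row_j sqrtC (d 0 j).
have s_ge0 : forall j, 0 <= s 0 j by move=> j; rewrite mxE sqrtC_ge0.
exists (Q *m diag_mx s *m adjmx Q); split; last first.
  rewrite -!mulmxA [adjmx Q *m _]mulmxA QaQ mul1mx [diag_mx s *m (diag_mx s *m _)]mulmxA mulmx_diag mulmxA.
  rewrite AE; congr (_ *m diag_mx _ *m _); apply/rowP => j.
  by rewrite !mxE -expr2 sqrtCK.
split.
  rewrite /herm_op !adjmxM adjmxK mulmxA; congr (_ *m _ *m _).
  apply/matrixP => i j; rewrite adjmxE !mxE.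
  case: (eqVneq i j) => [->|ne]; last by rewrite /= !mulr0n rmorph0.
  by rewrite /= !mulr1n conj_Creal // ger0_real // sqrtC_ge0.
move=> v; set w := adjmx Q *m v.
have -> : adjmx v *m (Q *m diag_mx s *m adjmx Q) *m v = adjmx w *m diag_mx s *m w.
  by rewrite /w adjmxM adjmxK !mulmxA.
rewrite mul_mx_diag mxE; apply: sumr_ge0 => j _; rewrite mxE adjmxE.
by rewrite mulrC mulrA mulr_ge0 // mul_conjC_ge0.
Qed.

Lemma sqrtm_spec n (A : 'M[C]_n) : psd A -> psd (sqrtm A) /\ sqrtm A *m sqrtm A = A.
Proof.
move=> pA; rewrite /sqrtm; case: excluded_middle_informative => [H|[]].
  by case: constructive_indefinite_description.
exact: psd_sqrt_ex.
Qed.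

Lemma sqrtm_herm n (A : 'M[C]_n) : herm_op (sqrtm A).
Proof.
rewrite /sqrtm; case: excluded_middle_informative => [H|_].
  by case: constructive_indefinite_description => S [[]].
by rewrite /herm_op adjmx0.
Qed.

Lemma mxtrace_sum n I (r : seq I) (P : pred I) (F : I -> 'M[C]_n) :
  \tr (\sum_(i <- r | P i) F i) = \sum_(i <- r | P i) \tr (F i).
Proof.
elim/big_rec2: _ => [|i y1 y2 _ <-]; first exact: mxtrace0.
by rewrite mxtraceD.
Qed.

Lemma tens1_J z a (W : 'M[C]_z) :
  W *t (1%:M : 'M[C]_a) = \sum_(b < a) Jm z b *m W *m adjmx (Jm z b).
Proof.
rewrite mx1_sum_delta tensmx_sumr; apply: eq_bigr => b _; by rewrite Jm_conj.
Qed.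

Lemma herm_invsqrt n (T : 'M[C]_n) : adjmx (invmx (sqrtm T)) = invmx (sqrtm T).
Proof. by rewrite adjmx_inv sqrtm_herm. Qed.

Lemma petz_kraus z a (g : 'M[C]_(z * a)) s :
  petz g s = \sum_(b < a) (sqrtm g *m (Jm z b *m invmx (sqrtm (ptrace2 g)))) *m s
                *m adjmx (sqrtm g *m (Jm z b *m invmx (sqrtm (ptrace2 g)))).
Proof.
rewrite /petz tens1_J mulmx_sumr mulmx_suml; apply: eq_bigr => b _.
rewrite !adjmxM herm_invsqrt sqrtm_herm !mulmxA //.
Qed.

Lemma petz_cp z a (g : 'M[C]_(z * a)) : completely_positive (petz g).
Proof.
apply: (cp_ext (f := fun s => \sum_(b < a) (sqrtm g *m (Jm z b *m invmx (sqrtm (ptrace2 g)))) *m s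
                *m adjmx (sqrtm g *m (Jm z b *m invmx (sqrtm (ptrace2 g)))))).
  by move=> s; rewrite petz_kraus.
by apply: cp_sum => b; apply: cp_kraus.
Qed.

Lemma petz_lin z a (g : 'M[C]_(z * a)) : linmap (petz g).
Proof.
move=> c X Y; rewrite /petz [_ *m (c *: X + Y)]mulmxDr mulmxDl -scalemxAr -scalemxAl.
by rewrite tensmxDl tensmxZl mulmxDr mulmxDl -scalemxAr -scalemxAl.
Qed.

Lemma ptrace2_blk z a (G : 'M[C]_(z * a)) : ptrace2 G = \sum_(b < a) blk G b b.
Proof. by apply/matrixP => i j; rewrite summxE !mxE; apply: eq_bigr => b _; rewrite mxE. Qed.

Lemma ptrace2_J z a (G : 'M[C]_(z * a)) :
  ptrace2 G = \sum_(b < a) adjmx (Jm z b) *m G *m Jm z b.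
Proof. by rewrite ptrace2_blk; apply: eq_bigr => b _; rewrite Jm_adj. Qed.

Lemma psd_ptrace2 z a (G : 'M[C]_(z * a)) : psd G -> psd (ptrace2 G).
Proof.
move=> pG; rewrite ptrace2_J; apply: psd_sum => b _.
by have := psd_conj (adjmx (Jm z b)) pG; rewrite adjmxK.
Qed.

Lemma ptrace2_lin z a : linmap (@ptrace2 z a).
Proof.
move=> c X Y; apply/matrixP => i j; rewrite !mxE.
under eq_bigr => b _ do rewrite !mxE.
by rewrite big_split /= -mulr_sumr.
Qed.

Lemma tr_tens1 z a (G : 'M[C]_(z * a)) (W : 'M[C]_z) :
  \tr (G *m (W *t (1%:M : 'M[C]_a))) = \tr (ptrace2 G *m W).
Proof.
rewrite tens1_J mulmx_sumr mxtrace_sum ptrace2_J mulmx_suml mxtrace_sum.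
apply: eq_bigr => b _.
by rewrite mulmxA mxtrace_mulC !mulmxA.
Qed.

Lemma blk1 n k (b : 'I_k) : blk (1%:M : 'M[C]_(n * k)) b b = 1%:M.
Proof.
apply/matrixP => i j; rewrite !mxE (inj_eq (can_inj (@mxtens_indexK _ _))) xpair_eqE eqxx andbT //.
Qed.

Lemma JaJ n k (b : 'I_k) : adjmx (Jm n b) *m Jm n b = 1%:M.
Proof. by rewrite -[adjmx _](mulmx1) Jm_adj blk1. Qed.

Lemma norm0 n (w : 'cV[C]_n) : (adjmx w *m w) 0 0 = 0 -> w = 0.
Proof.
rewrite mxE => H; apply/matrixP => i j; rewrite [j]ord1 mxE.
have Hn : forall k, 0 <= adjmx w 0 k * w k 0.
  by move=> k; rewrite adjmxE mulrC mul_conjC_ge0.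
have := @psumr_eq0P _ _ xpredT (fun k => adjmx w 0 k * w k 0) (fun k _ => Hn k) H i isT.
by rewrite adjmxE => /eqP; rewrite mulf_eq0 conjC_eq0 orbb => /eqP.
Qed.

Lemma psd_ker n (G : 'M[C]_n) (v : 'cV_n) :
  psd G -> (adjmx v *m G *m v) 0 0 = 0 -> G *m v = 0.
Proof.
move=> pG H; have [[hS _] SS] := sqrtm_spec pG.
have E : adjmx (sqrtm G *m v) *m (sqrtm G *m v) = adjmx v *m G *m v.
  by rewrite adjmxM hS !mulmxA -[adjmx v *m sqrtm G *m sqrtm G]mulmxA SS.
move: H; rewrite -E => /norm0 Sv.
by rewrite -SS -mulmxA Sv mulmx0.
Qed.

Lemma ptrace_unit z a (G : 'M[C]_(z * a)) : (0 < a)%N -> psd G -> G \in unitmx ->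
  ptrace2 G \in unitmx.
Proof.
move=> a0 pG uG.
have H : forall u : 'rV_z, u *m ptrace2 G = 0 -> u = 0.
  move=> u uT.
  have Tv : ptrace2 G *m adjmx u = 0.
    by have [hT _] := psd_ptrace2 pG; rewrite -hT -adjmxM uT adjmx0.
  have : (adjmx (adjmx u) *m ptrace2 G *m adjmx u) 0 0 = 0.
    by rewrite -mulmxA Tv mulmx0 mxE.
  rewrite ptrace2_J mulmx_sumr mulmx_suml summxE => H0.
  have Hn : forall b, 0 <= (adjmx (adjmx u) *m (adjmx (Jm z b) *m G *m Jm z b) *m adjmx u) 0 0.
    by move=> b; rewrite !mulmxA -adjmxM -mulmxA; case: pG => _; apply.
  have b0 : 'I_a := Ordinal a0.
  have := @psumr_eq0P _ _ xpredT _ (fun b _ => Hn b) H0 b0 isT.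
  rewrite !mulmxA -adjmxM -mulmxA => /(psd_ker pG) GJ0.
  suff : adjmx u = 0 by move/(congr1 adjmx); rewrite adjmxK adjmx0.
  have : Jm z b0 *m adjmx u = 0.
    by rewrite -[Jm z b0 *m _](mulKmx uG) GJ0 mulmx0.
  by move/(congr1 (mulmx (adjmx (Jm z b0)))); rewrite mulmxA JaJ mul1mx mulmx0.
rewrite -row_free_unit -kermx_eq0; apply/eqP/row_matrixP => i.
by rewrite row0; apply: H; rewrite -row_mul mulmx_ker row0.
Qed.

Lemma linmap0 m n (f : 'M[C]_m -> 'M[C]_n) : linmap f -> f 0 = 0.
Proof.
move=> H; have E := H 1 0 0; rewrite !scale1r !addr0 in E.
by apply: (@addrI _ (f 0)); rewrite addr0 -E.
Qed.

Lemma linmapZ m n (f : 'M[C]_m -> 'M[C]_n) c X : linmap f -> f (c *: X) = c *: f X.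
Proof. by move=> H; have := H c X 0; rewrite (linmap0 H) !addr0. Qed.

Lemma hTh z a (g : 'M[C]_(z * a)) : (0 < a)%N -> psd g -> g \in unitmx ->
  invmx (sqrtm (ptrace2 g)) *m ptrace2 g *m invmx (sqrtm (ptrace2 g)) = 1%:M.
Proof.
move=> a0 pg ug.
have uT := ptrace_unit a0 pg ug.
have [_ RR] := sqrtm_spec (psd_ptrace2 pg).
have uR : sqrtm (ptrace2 g) \in unitmx.
  by move: uT; rewrite -{1}RR unitmx_mul => /andP[].
rewrite -{2}RR !mulmxA mulVmx // mul1mx mulmxV //.
Qed.

Lemma petz_tp z a (g : 'M[C]_(z * a)) s : (0 < a)%N -> psd g -> g \in unitmx ->
  \tr (petz g s) = \tr s.
Proof.
move=> a0 pg ug; have [_ SS] := sqrtm_spec pg.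
rewrite /petz mxtrace_mulC mulmxA SS tr_tens1.
rewrite !mulmxA mxtrace_mulC !mulmxA.
by rewrite (hTh a0 pg ug) mul1mx.
Qed.

Lemma petz_self z a (g : 'M[C]_(z * a)) : (0 < a)%N -> psd g -> g \in unitmx ->
  petz g (ptrace2 g) = g.
Proof.
move=> a0 pg ug; have [_ SS] := sqrtm_spec pg.
by rewrite /petz (hTh a0 pg ug) tens11 mulmx1 SS.
Qed.

Lemma a_pos z a (g : 'M[C]_(z * a)) : \tr g = 1 -> (0 < a)%N.
Proof.
case: a g => // g; rewrite /mxtrace sum_tens big1 => [|i _]; last by rewrite big_ord0.
by move/eqP; rewrite eq_sym oner_eq0.
Qed.

Lemma mxtrace_delta k (b : 'I_k) : \tr (delta_mx b b : 'M[C]_k) = 1.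
Proof.
rewrite /mxtrace -[RHS](sum_delta b (fun _ => 1)); apply: eq_bigr => i _.
by rewrite mxE andbb mulr1.
Qed.

Lemma tr_blk n k (Y : 'M[C]_(n * k)) : \sum_(b < k) \tr (blk Y b b) = \tr Y.
Proof.
rewrite [RHS]/mxtrace sum_tens exchange_big; apply: eq_bigr => b _.
by apply: eq_bigr => i _; rewrite mxE.
Qed.

Lemma proj_lin n (P : 'M[C]_n) c X Y :
  P *m (c *: X + Y) *m P = c *: (P *m X *m P) + P *m Y *m P.
Proof. by rewrite mulmxDr mulmxDl -scalemxAr -scalemxAl. Qed.

Theorem mainTheorem3 (dX dZ dA K : nat)
  (Pi : 'I_K -> 'M[C]_dX) (gam : 'I_K -> 'M[C]_(dZ * dA)) :
  (forall k, herm_op (Pi k)) ->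
  (forall k l, Pi k *m Pi l = (if k == l then Pi k else 0)) ->
  \sum_(k < K) Pi k = 1%:M ->
  (forall k, density (gam k)) ->
  (forall k, \rank (gam k) = (dZ * dA)%N) ->
  superchannel (Rmap (z:=dZ) (a:=dA) Pi gam) /\
  (forall rho : 'M[C]_dX, Rmap Pi gam (S4 (Gam Pi gam)) rho = Gam Pi gam rho).
Proof.
move=> hP oP sP dg rg.
have pg : forall k, psd (gam k) by move=> k; case: (dg k).
have ug : forall k, gam k \in unitmx by move=> k; rewrite -row_free_unit /row_free rg.
have a0 : forall k : 'I_K, (0 < dA)%N by move=> k; case: (dg k) => _ /a_pos.
have PP : forall k, Pi k *m Pi k = Pi k by move=> k; rewrite oP eqxx.
have trP : forall k X, \tr (Pi k *m X *m Pi k) = \tr (Pi k *m X).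
  by move=> k X; rewrite mxtrace_mulC mulmxA PP.
have sumtr : forall X, \sum_(k < K) \tr (Pi k *m X) = \tr X.
  by move=> X; rewrite -mxtrace_sum -mulmx_suml sP mul1mx.
have cpP : forall k, completely_positive (fun X => Pi k *m X *m Pi k).
  move=> k; apply: (cp_ext (f := fun X => Pi k *m X *m adjmx (Pi k))); last exact: cp_kraus.
  by move=> X; rewrite hP.
split; last first.
  move=> rho; rewrite /Rmap /S4 /Gam; apply: eq_bigr => k _.
  have -> : \sum_(l < K) \tr (Pi l *m (Pi k *m rho *m Pi k)) *: gam l =
            \tr (Pi k *m rho) *: gam k.
    rewrite (bigD1 k) //= big1 ?addr0.
      by rewrite !mulmxA PP trP.
    move=> l /negbTE lk; rewrite !mulmxA oP lk !mul0mx mxtrace0 scale0r //.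
  rewrite (@linmapZ _ _ (@ptrace2 dZ dA) _ _ (@ptrace2_lin dZ dA)) (@linmapZ _ _ (petz (gam k)) _ _ (petz_lin (gam k))).
  by rewrite (petz_self (a0 k) (pg k) (ug k)).
split.
- move=> al N1 N2 l1 l2 X; rewrite /Rmap scaler_sumr -big_split /=.
  by apply: eq_bigr => k _; rewrite petz_lin.
- move=> N [lN cN tN]; split.
  + move=> c X Y; rewrite /Rmap scaler_sumr -big_split /=.
    by apply: eq_bigr => k _; rewrite proj_lin lN petz_lin.
  + apply: cp_sum => k; apply: cp_comp; first exact: petz_cp.
    by apply: cp_comp => //; exact: cpP.
  + move=> X; rewrite /Rmap mxtrace_sum -[RHS]sumtr; apply: eq_bigr => k _.
    by rewrite (petz_tp _ (a0 k) (pg k) (ug k)) tN trP.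
exists K, (fun X => \sum_(k < K) (Pi k *m X *m Pi k) *t (delta_mx k k : 'M[C]_K)),
  (fun Y => \sum_(k < K) petz (gam k) (blk Y k k)); split.
- split.
  + move=> c X Y; rewrite scaler_sumr -big_split /=; apply: eq_bigr => k _.
    by rewrite proj_lin tensmxDl tensmxZl.
  + apply: cp_sum => k.
    apply: (cp_ext (f := fun X => Jm dX k *m (Pi k *m X *m Pi k) *m adjmx (Jm dX k))).
      by move=> X; apply: Jm_conj.
    exact: (cp_comp (cp_kraus (Jm dX k)) (cpP k)).
  + move=> X; rewrite mxtrace_sum -[RHS]sumtr; apply: eq_bigr => k _.
    by rewrite mxtrace_tens mxtrace_delta mulr1 trP.
- split.
  + move=> c X Y; rewrite scaler_sumr -big_split /=; apply: eq_bigr => k _.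
    by rewrite blkD blkZ petz_lin.
  + apply: cp_sum => k; apply: cp_comp; first exact: petz_cp.
    apply: (cp_ext (f := fun Y => adjmx (Jm dZ k) *m Y *m adjmx (adjmx (Jm dZ k)))); last exact: cp_kraus.
    by move=> Y; rewrite adjmxK Jm_adj.
  + move=> Y; rewrite mxtrace_sum -tr_blk; apply: eq_bigr => k _.
    by rewrite (petz_tp _ (a0 k) (pg k) (ug k)).
- move=> N lN X; rewrite /Rmap; apply: eq_bigr => k _.
  rewrite (@blk_tens_id _ _ N K) blk_sum (bigD1 k); last by [].
  rewrite /= [Z in _ + Z]big1 ?addr0; last first.
    by move=> l /negbTE lk; rewrite blk_tens mxE [k == l]eq_sym lk scale0r.
  by rewrite blk_tens mxE eqxx scale1r.
Qed.
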